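(* Let $\Lambda$ be a finite nonempty set and $\mathcal{D}\subseteq\Lambda\times2^\Lambda$. Then: (1) $\mathcal{D}\subseteq\mathcal{D}^\circ\subseteq(\mathcal{D}^\circ)^{\sf ex}\subseteq\overline{\mathcal{D}}$ and ${\sf Base}(\mathcal{D})={\sf Base}(\mathcal{D}^\circ)={\sf Base}((\mathcal{D}^\circ)^{\sf ex})$; (2) $(\mathcal{D}^\circ)^\circ=\mathcal{D}^\circ$, $(\mathcal{D}^{\sf ex})^{\sf ex}=\mathcal{D}^{\sf ex}$ and $(\Lambda^{\sf triv})^{\sf ex}=\Lambda^{\sf triv}$; (3) $(\overline{\mathcal{D}})^{\sf ex}=\overline{\mathcal{D}}$; (4) if $(b,B),(c,C)\in\overline{\mathcal{D}}$ then $(b,B)\circ(c,C)\in\overline{\mathcal{D}}$; in particular $(\overline{\mathcal{D}})^\circ=\overline{\mathcal{D}}$; (5) $\overline{\overline{\mathcal{D}}}=\overline{\mathcal{D}}$; (6) if $\mathcal{D}\subseteq{\sf Div}(U)$ for a set of monomials $U$ indexed by $\Lambda$, then $\overline{\mathcal{D}}\subseteq{\sf Div}(U)$; in particular $\overline{{\sf Div}(U)}={\sf Div}(U)$.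
   Context: For monomials $U=\{u_i:i\in\Lambda\}$ (indexed so that $u_i=u_j$ implies $i=j$), a divisibility relation on $U$ is a pair $(b,B)$, $b\in\Lambda$, $\emptyset\ne B\subseteq\Lambda$, with $u_b\mid\mathrm{lcm}(u_i:i\in B)$; ${\sf Div}(U)$ is the set of these. $(b,B)^{\sf ex}=\{(b,C):B\subseteq C\subseteq\Lambda\}$; $(b,B)\circ(c,C)=(b,(B\smallsetminus\{c\})\cup C)$ (not associative). For $\mathcal{D}\subseteq\Lambda\times2^\Lambda$: $\mathcal{D}^\circ$ is the set of all compositions $(b_1,B_1)\circ\cdots\circ(b_s,B_s)$ with $s\ge1$ and $(b_i,B_i)\in\mathcal{D}$, including all possible bracketings; $\mathcal{D}^{\sf ex}=\bigcup_{(b,B)\in\mathcal{D}}(b,B)^{\sf ex}$; $\Lambda^{\sf triv}=\{(b,B)\in\Lambda\times2^\Lambda:b\in B\}$; $\overline{\mathcal{D}}=(\mathcal{D}^\circ)^{\sf ex}\cup\Lambda^{\sf triv}$; ${\sf Base}(\mathcal{D})=\{b:(b,B)\in\mathcal{D}\text{ for some }B\}$. *)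

(* Defs.v *)
From mathcomp Require Import all_boot all_order.
From mathcomp Require Import boolp classical_sets.
Set Implicit Arguments. Unset Strict Implicit. Unset Printing Implicit Defensive.

(* Lambda is a finType T; a "relation" (b,B) is an element of T * {set T};
   subsets of Lambda x 2^Lambda are classical sets  set (T * {set T}). *)
Section Defs.
Variable T : finType.
Notation dpair := (T * {set T})%type.

Definition dcomp (x y : dpair) : dpair := (x.1, (x.2 :\ y.1) :|: y.2).

(* D^o : all compositions of elements of D, with all bracketings,
   i.e. the values of all binary trees with leaves in D. *)
Inductive dcirc (D : set dpair) : dpair -> Prop :=
| dcirc_base x : D x -> dcirc D x
| dcirc_comp x y : dcirc D x -> dcirc D y -> dcirc D (dcomp x y).

Definition dex1 (x : dpair) : set dpair := fun y => y.1 = x.1 /\ x.2 \subset y.2.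

Definition dex (D : set dpair) : set dpair := fun y => exists2 x, D x & dex1 x y.

Definition dtriv : set dpair := fun y => y.1 \in y.2.

Definition dbar (D : set dpair) : set dpair := dex (dcirc D) `|` dtriv.

Definition dbase (D : set dpair) : set T := fun b => exists B, D (b, B).

(* Monomials in n variables, represented by exponent vectors;
   u | v iff componentwise <=, lcm = componentwise max. *)
Definition monomial (n : nat) := {ffun 'I_n -> nat}.
Definition mdvd n (a b : monomial n) : Prop := forall k, a k <= b k.
Definition mlcm n (B : {set T}) (u : T -> monomial n) : monomial n :=
  [ffun k => \max_(i in B) u i k].

Definition Div n (u : T -> monomial n) : set dpair :=
  fun x => x.2 != finset.set0 /\ mdvd (u x.1) (mlcm x.2 u).
End Defs.

(* Main.v *)
Require Import Defs.
From mathcomp Require Import all_boot all_order.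
From mathcomp Require Import boolp classical_sets.
Local Open Scope classical_set_scope.
Set Implicit Arguments. Unset Strict Implicit.

Section H.
Variable T : finType.
Notation dp := (T * {set T})%type.

Lemma seteq (A B : set dp) : A `<=` B -> B `<=` A -> A = B.
Proof. move=> h1 h2; apply/seteqP; split; [exact: h1|exact: h2]. Qed.

Lemma dcirc_base1 (D : set dp) x : dcirc D x -> exists B, D (x.1, B).
Proof.
elim=> [[b B] Dx|x0 y _ [B h] _ _]; first by exists B.
by exists B.
Qed.

Lemma dcirc_mono (D E : set dp) : D `<=` E -> dcirc D `<=` dcirc E.
Proof. move=> h x0; elim=> [y /h|y z _ h1 _ h2]; [exact: dcirc_base|exact: dcirc_comp]. Qed.

Lemma dcirc_idem (D : set dp) : dcirc (dcirc D) = dcirc D.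
Proof.
apply: seteq; last by move=> x; exact: dcirc_base.
move=> x0; elim=> // y z _ h1 _ h2; exact: dcirc_comp.
Qed.

Lemma dex_refl (D : set dp) : D `<=` dex D.
Proof. by move=> x Dx; exists x => //; split. Qed.

Lemma dex_idem (D : set dp) : dex (dex D) = dex D.
Proof.
apply: seteq; last exact: dex_refl.
move=> x [y [z Dz [e1 s1]] [e2 s2]]; exists z => //; split.
  by rewrite e2 e1.
exact: (fintype.subset_trans s1 s2).
Qed.

Lemma dex_triv : dex (@dtriv T) = @dtriv T.
Proof.
apply: seteq; last exact: dex_refl.
move=> x [y ty [e s]]; rewrite /dtriv e; exact: (fintype.subsetP s _ ty).
Qed.

Lemma dex_union (A B : set dp) : dex (A `|` B) = dex A `|` dex B.
Proof.
apply: seteq.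
  by move=> x [y [Ay|By] h]; [left|right]; exists y.
by move=> x [[y Ay h]|[y By h]]; exists y => //; [left|right].
Qed.

Lemma dbar_ex (D : set dp) : dex (dbar D) = dbar D.
Proof. by rewrite /dbar dex_union dex_idem dex_triv. Qed.

Lemma dbar_sup (D : set dp) (x y : dp) : dbar D x -> y.1 = x.1 -> x.2 \subset y.2 -> dbar D y.
Proof. move=> h e s; rewrite -dbar_ex; exists x => //. Qed.

Lemma dbar_comp (D : set dp) x y : dbar D x -> dbar D y -> dbar D (dcomp x y).
Proof.
case: x => b B; case: y => c C /= hx hy.
rewrite /dcomp /=.
have [tx|ntx] := boolP (b \in B).
  have [ebc|nbc] := eqVneq b c.
    subst c; apply: (dbar_sup hy) => //=; exact: finset.subsetUr.
  right; rewrite /dtriv /= !inE (negbTE nbc) tx //.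
have [ty|nty] := boolP (c \in C).
  apply: (dbar_sup hx) => //=; apply/fintype.subsetP => i iB.
  rewrite !inE; case: eqP => [->|_]; by rewrite ?ty ?iB ?orbT.
case: hx => [[[b0 B0] cx [/= e1 s1]]|] ; last by rewrite /dtriv /= (negbTE ntx).
case: hy => [[[c0 C0] cy [/= e2 s2]]|] ; last by rewrite /dtriv /= (negbTE nty).
left; exists (dcomp (b0, B0) (c0, C0)); first exact: dcirc_comp.
rewrite /dcomp /=; split => //=; subst.
apply/fintype.subsetP => i; rewrite !inE => /orP [/andP [ni iB]|iC].
  by rewrite ni (fintype.subsetP s1 _ iB).
by rewrite (fintype.subsetP s2 _ iC) orbT.
Qed.

Lemma dcirc_dbar (D : set dp) : dcirc (dbar D) = dbar D.
Proof.
apply: seteq; last by move=> x; exact: dcirc_base.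
move=> x0; elim=> // y z _ h1 _ h2; exact: dbar_comp.
Qed.

Lemma dbar_idem (D : set dp) : dbar (dbar D) = dbar D.
Proof.
rewrite {1}/dbar dcirc_dbar dbar_ex; apply: seteq; last by move=> x; left.
by move=> x [//|t]; right.
Qed.

Lemma Div_triv n (u : T -> monomial n) : @dtriv T `<=` Div u.
Proof.
move=> [b B]; rewrite /dtriv /Div /= => bB; split.
  by apply/set0Pn; exists b.
move=> k; rewrite /mlcm ffunE; exact: (leq_bigmax_cond _ bB).
Qed.

Lemma Div_ex n (u : T -> monomial n) : dex (Div u) `<=` Div u.
Proof.
move=> [b B] [[c C] [/= ne dv] [/= e s]]; subst c; split => /=.
  apply: contraNneq ne => B0; rewrite -finset.subset0 -B0 //.
move=> k; apply: leq_trans (dv k) _; rewrite /mlcm !ffunE.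
apply/bigmax_leqP => i iC; apply: leq_bigmax_cond; exact: (fintype.subsetP s).
Qed.

Lemma Div_comp n (u : T -> monomial n) x y : Div u x -> Div u y -> Div u (dcomp x y).
Proof.
case: x => b B; case: y => c C [/= neB dB] [/= neC dC]; rewrite /dcomp /=; split => /=.
  case/set0Pn: neC => i iC; apply/set0Pn; exists i; by rewrite inE iC orbT.
move=> k; apply: leq_trans (dB k) _; rewrite /mlcm !ffunE.
apply/bigmax_leqP => i iB.
have [eic|nic] := eqVneq i c.
  subst i; apply: leq_trans (dC k) _; rewrite ffunE.
  apply/bigmax_leqP => j jC; apply: leq_bigmax_cond; by rewrite inE jC orbT.
by apply: leq_bigmax_cond; rewrite !inE nic iB.
Qed.

Lemma Div_dbar n (u : T -> monomial n) (D : set dp) : D `<=` Div u -> dbar D `<=` Div u.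
Proof.
move=> h x [[y cy e]|t]; last exact: Div_triv.
apply: Div_ex; exists y => //.
elim: cy {e} => [z /h //|z w _ h1 _ h2]; exact: Div_comp.
Qed.

End H.

Theorem proposition2p5 (T : finType) (Lambda_nonempty : 0 < #|T|)
    (D : set (T * {set T})) :
  (* (1) *)
  (D `<=` dcirc D /\ dcirc D `<=` dex (dcirc D) /\ dex (dcirc D) `<=` dbar D /\
   dbase D = dbase (dcirc D) /\ dbase (dcirc D) = dbase (dex (dcirc D))) /\
  (* (2) *)
  (dcirc (dcirc D) = dcirc D /\ dex (dex D) = dex D /\ dex (@dtriv T) = @dtriv T) /\
  (* (3) *)
  dex (dbar D) = dbar D /\
  (* (4) *)
  ((forall x y, dbar D x -> dbar D y -> dbar D (dcomp x y)) /\
   dcirc (dbar D) = dbar D) /\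
  (* (5) *)
  dbar (dbar D) = dbar D /\
  (* (6) *)
  (forall (n : nat) (u : T -> monomial n), injective u ->
     (D `<=` Div u -> dbar D `<=` Div u) /\ dbar (Div u) = Div u).
Proof.
split.
  split; first by move=> x; exact: dcirc_base.
  split; first exact: dex_refl.
  split; first by move=> x h; left.
  split.
    apply/seteqP; split => b [B h]; first by exists B; exact: dcirc_base.
    by case: (dcirc_base1 h) => B0 h0; exists B0.
  apply/seteqP; split => b [B h]; first by exists B; exact: dex_refl.
  case: h => [[c C] cx [/= e _]]; subst c; by exists C.
split; first by split; [exact: dcirc_idem|split; [exact: dex_idem|exact: dex_triv]].
split; first exact: dbar_ex.
split; first by split; [exact: dbar_comp|exact: dcirc_dbar].
split; first exact: dbar_idem.
move=> n u _; split; first exact: Div_dbar.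
apply: seteq; first exact: Div_dbar.
by move=> x h; left; exists x; [exact: dcirc_base|split].
Qed.
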